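(* In the multi-user imperfect-prediction setting below, for all $\lambda\ge0$, $$g_I^l(\lambda)\le g_I(\lambda)\le g_I^u(\lambda),$$ and consequently $\min_{\lambda\ge0}g_I^l(\lambda)\le\min_{\lambda\ge0}g_I(\lambda)\le\min_{\lambda\ge0}g_I^u(\lambda)$.
   Context: $N$ users; $B>0$; $a_{\max}>0$. User $n$ has arrival rate $a_n\ge0$, true-positive rate $p_n$ and false-negative rate $q_n$ with $0\le q_n<p_n\le1$ and $q_n\le a_n/a_{\max}\le p_n$, $\tilde a_n=\frac{a_n-a_{\max}q_n}{p_n-q_n}$, a probability vector $\boldsymbol\eta_n$ on its channel states, $\beta_n\ge0$, integers $\tau_n\ge1$, $D_n\ge1$, a Markov channel on $\{1,\dots,K_n\}$ with transition matrix $(P_n^{i,j})$, a finite $\mathcal E\subset[0,\infty)$ containing $0$ and a positive element, and $\zeta_n(i,\cdot):\mathcal E\to[0,1]$ with $\zeta_n(i,0)=0$, $\zeta_n(i,e)>0$ for $e>0$, strictly increasing; states totally ordered by $\zeta_n$ (for all $i,j$ either $\zeta_n(i,e)\ge\zeta_n(j,e)\ \forall e$ or $\le\ \forall e$) with extremal states $i_n^{\max},i_n^{\min}$. For $\lambda\ge0$ (all functions depend on $\lambda$): $V_n^l(0)=0$, $V_n^l(\tau)=\max_{e>0}\frac{1-[1-\zeta_n(i_n^{\min},e)]^{\tau}}{\zeta_n(i_n^{\min},e)}[-\lambda e+\zeta_n(i_n^{\min},e)\beta_n]$; $V_n^u(0)=0$, $V_n^u(\tau)=\sum_{z=1}^{\tau}\max_{e}\{-\lambda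 e+\zeta_n(i_n^{\max},e)(\beta_n-\max\{0,V_n^l(z-1)\})\}$; for $\tau_n\le\tau\le\tau_n+D_n$, $\tilde V_n^l(\tau)=\max_{e>0}\{-(1-p_n)\frac{1-[1-\zeta_n(i_n^{\min},e)]^{\tau-\tau_n}}{\zeta_n(i_n^{\min},e)}\lambda e+p_n\frac{1-[1-\zeta_n(i_n^{\min},e)]^{\tau}}{\zeta_n(i_n^{\min},e)}[-\lambda e+\zeta_n(i_n^{\min},e)\beta_n]\}$ and $\tilde V_n^u(\tau)=\sum_{z=\tau_n+1}^{\tau}\max_e\{-\lambda e+\zeta_n(i_n^{\max},e)(p_n\beta_n-\max\{0,\tilde V_n^l(\tau_n),\tilde V_n^l(z-1)\})\}+p_n\sum_{z=1}^{\tau_n}\max_e\{-\lambda e+\zeta_n(i_n^{\max},e)(\beta_n-\max\{0,V_n^l(z-1)\})\}$ (maxima over $e\in\mathcal E$). The imperfect-prediction value function $V_n^I$: $V_n^I(0,0,i)=0$; $V_n^I(0,\tau,i)=\max_e\{-\lambda e+\zeta_n(i,e)\beta_n+(1-\zeta_n(i,e))\sum_jP_n^{i,j}V_n^I(0,\tau-1,j)\}$ for $1\le\tau\le\tau_n$; $V_n^I(0,\tau_n+1,i)=\max_e\{-\lambda e+\zeta_n(i,e)p_n\beta_n+p_n(1-\zeta_n(i,e))\sum_jP_n^{i,j}V_n^I(0,\tau_n,j)\}$; $V_n^I(0,\tau,i)=\max_e\{-\lambda e+\zeta_n(i,e)p_n\beta_n+(1-\zeta_n(i,e))\sum_jP_n^{i,j}V_n^I(0,\tau-1,j)\}$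 for $\tau_n+2\le\tau\le\tau_n+D_n$. Define $g_I(\lambda)=\lambda B+\sum_n\big[\tilde a_n\sum_i\eta_n^iV_n^I(0,\tau_n+D_n,i)+(a_{\max}-\tilde a_n)q_n\sum_i\eta_n^iV_n^I(0,\tau_n,i)\big]$, $g_I^u(\lambda)=\lambda B+\sum_n\{\tilde a_n\min[p_n\beta_n,\tilde V_n^u(\tau_n+D_n)]+(a_{\max}-\tilde a_n)q_n\min[\beta_n,V_n^u(\tau_n)]\}$, $g_I^l(\lambda)=\lambda B+\sum_n\{\tilde a_n\max[0,\tilde V_n^l(\tau_n),\tilde V_n^l(\tau_n+D_n)]+(a_{\max}-\tilde a_n)q_n\max[0,V_n^l(\tau_n)]\}$. $g_I$ is the Lagrange dual function with imperfect prediction. *)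

(* Defs.v *)
From Stdlib Require Import Reals Lra List.
Import ListNotations.
Open Scope R_scope.

Fixpoint sumR (f : nat -> R) (n : nat) : R :=
  match n with O => 0 | S k => sumR f k + f k end.

(* sum_{z = lo}^{hi} f z  (empty when hi < lo) *)
Definition sum_range (lo hi : nat) (f : nat -> R) : R :=
  sumR (fun k => f (lo + k)%nat) (S hi - lo).

(* maximum of f over a (nonempty) list; 0 for the empty list (never used) *)
Definition maxL (f : R -> R) (l : list R) : R :=
  match l with
  | [] => 0
  | x :: l' => fold_right (fun y m => Rmax (f y) m) (f x) l'
  end.

Definition posb (e : R) : bool := if Rlt_dec 0 e then true else false.

(* Model data. Users are indexed 0..N-1, channel states of user n by
   0..K n - 1. *)
Record Model := mkModel {
  m_N : nat;
  m_B : R;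
  m_amax : R;
  m_a : nat -> R;
  m_p : nat -> R;                 (* true-positive rate *)
  m_q : nat -> R;                 (* false-negative rate *)
  m_eta : nat -> nat -> R;
  m_beta : nat -> R;
  m_tau : nat -> nat;
  m_D : nat -> nat;
  m_K : nat -> nat;
  m_P : nat -> nat -> nat -> R;
  m_E : list R;
  m_zeta : nat -> nat -> R -> R;
  m_imax : nat -> nat;
  m_imin : nat -> nat
}.

Definition valid (m : Model) : Prop :=
  0 < m_B m /\ 0 < m_amax m /\
  In 0 (m_E m) /\ (exists e, In e (m_E m) /\ 0 < e) /\
  (forall e, In e (m_E m) -> 0 <= e) /\
  forall n, (n < m_N m)%nat ->
    0 <= m_a m n /\
    0 <= m_q m n /\ m_q m n < m_p m n /\ m_p m n <= 1 /\
    m_q m n <= m_a m n / m_amax m /\ m_a m n / m_amax m <= m_p m n /\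
    0 <= m_beta m n /\
    (1 <= m_tau m n)%nat /\ (1 <= m_D m n)%nat /\
    (forall i, (i < m_K m n)%nat -> 0 <= m_eta m n i) /\
    sumR (m_eta m n) (m_K m n) = 1 /\
    (forall i j, (i < m_K m n)%nat -> (j < m_K m n)%nat -> 0 <= m_P m n i j) /\
    (forall i, (i < m_K m n)%nat -> sumR (m_P m n i) (m_K m n) = 1) /\
    (forall i, (i < m_K m n)%nat ->
       m_zeta m n i 0 = 0 /\
       (forall e, In e (m_E m) -> 0 <= m_zeta m n i e <= 1) /\
       (forall e, In e (m_E m) -> 0 < e -> 0 < m_zeta m n i e) /\
       (forall e1 e2, In e1 (m_E m) -> In e2 (m_E m) -> e1 < e2 ->
          m_zeta m n i e1 < m_zeta m n i e2)) /\
    (forall i j, (i < m_K m n)%nat -> (j < m_K m n)%nat ->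
       (forall e, In e (m_E m) -> m_zeta m n i e >= m_zeta m n j e) \/
       (forall e, In e (m_E m) -> m_zeta m n i e <= m_zeta m n j e)) /\
    (m_imax m n < m_K m n)%nat /\ (m_imin m n < m_K m n)%nat /\
    (forall i e, (i < m_K m n)%nat -> In e (m_E m) ->
       m_zeta m n (m_imin m n) e <= m_zeta m n i e <= m_zeta m n (m_imax m n) e).

Section Functions.
Variable m : Model.
Variable lam : R.

Definition Epos := filter posb (m_E m).
Definition atil (n : nat) : R :=
  (m_a m n - m_amax m * m_q m n) / (m_p m n - m_q m n).

Definition Vl (n tau : nat) : R :=
  match tau with
  | O => 0
  | _ => maxL (fun e => let z := m_zeta m n (m_imin m n) e in
               (1 - (1 - z) ^ tau) / z * (- lam * e + z * m_beta m n)) Epos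
  end.

Definition Vu (n tau : nat) : R :=
  sum_range 1 tau (fun z => maxL (fun e =>
     - lam * e + m_zeta m n (m_imax m n) e * (m_beta m n - Rmax 0 (Vl n (z - 1))))
     (m_E m)).

(* tilde V_n^l, meaningful for tau_n <= tau <= tau_n + D_n *)
Definition Vtl (n tau : nat) : R :=
  maxL (fun e => let z := m_zeta m n (m_imin m n) e in
        - (1 - m_p m n) * ((1 - (1 - z) ^ (tau - m_tau m n)) / z) * (lam * e)
        + m_p m n * ((1 - (1 - z) ^ tau) / z) * (- lam * e + z * m_beta m n)) Epos.

Definition Vtu (n tau : nat) : R :=
  sum_range (S (m_tau m n)) tau (fun z => maxL (fun e =>
     - lam * e + m_zeta m n (m_imax m n) e *
        (m_p m n * m_beta m n - Rmax 0 (Rmax (Vtl n (m_tau m n)) (Vtl n (z - 1)))))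
     (m_E m))
  + m_p m n * sum_range 1 (m_tau m n) (fun z => maxL (fun e =>
     - lam * e + m_zeta m n (m_imax m n) e * (m_beta m n - Rmax 0 (Vl n (z - 1))))
     (m_E m)).

(* imperfect-prediction value function V_n^I(0, tau, i) *)
Fixpoint VI (n tau i : nat) {struct tau} : R :=
  match tau with
  | O => 0
  | S t =>
    let cont := sumR (fun j => m_P m n i j * VI n t j) (m_K m n) in
    if Nat.leb (S t) (m_tau m n) then
      maxL (fun e => - lam * e + m_zeta m n i e * m_beta m n
                     + (1 - m_zeta m n i e) * cont) (m_E m)
    else if Nat.eqb (S t) (S (m_tau m n)) then
      maxL (fun e => - lam * e + m_zeta m n i e * m_p m n * m_beta m n
                     + m_p m n * (1 - m_zeta m n i e) * cont) (m_E m)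
    else
      maxL (fun e => - lam * e + m_zeta m n i e * m_p m n * m_beta m n
                     + (1 - m_zeta m n i e) * cont) (m_E m)
  end.

Definition gI : R :=
  lam * m_B m + sumR (fun n =>
    atil n * sumR (fun i => m_eta m n i * VI n (m_tau m n + m_D m n) i) (m_K m n)
    + (m_amax m - atil n) * m_q m n *
        sumR (fun i => m_eta m n i * VI n (m_tau m n) i) (m_K m n)) (m_N m).

Definition gIu : R :=
  lam * m_B m + sumR (fun n =>
    atil n * Rmin (m_p m n * m_beta m n) (Vtu n (m_tau m n + m_D m n))
    + (m_amax m - atil n) * m_q m n * Rmin (m_beta m n) (Vu n (m_tau m n))) (m_N m).

Definition gIl : R :=
  lam * m_B m + sumR (fun n =>
    atil n * Rmax 0 (Rmax (Vtl n (m_tau m n)) (Vtl n (m_tau m n + m_D m n)))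
    + (m_amax m - atil n) * m_q m n * Rmax 0 (Vl n (m_tau m n))) (m_N m).

End Functions.

(* Main.v *)
Require Import Defs.
From Stdlib Require Import Reals Lra Lia List.
Import ListNotations.
Open Scope R_scope.

Lemma maxL_ub (f : R -> R) (l : list R) x : In x l -> f x <= maxL f l.
Proof.
  destruct l as [|a l]; [intros []|].
  simpl. revert a. induction l as [|b l IH]; intros a Hx; simpl in *.
  - destruct Hx as [<-|[]]; lra.
  - destruct Hx as [<-|[<-|Hx]].
    + specialize (IH a (or_introl eq_refl)). eapply Rle_trans; [exact IH|apply Rmax_r].
    + apply Rmax_l.
    + specialize (IH a (or_intror Hx)). eapply Rle_trans; [exact IH|apply Rmax_r].
Qed.

Lemma maxL_lub (f : R -> R) (l : list R) c : l <> [] -> (forall x, In x l -> f x <= c) -> maxL f l <= c.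
Proof.
  destruct l as [|a l]; [congruence|]. intros _ H. simpl.
  assert (Ha : f a <= c) by (apply H; left; auto).
  assert (Hl : forall x, In x l -> f x <= c) by (intros; apply H; right; auto).
  clear H. induction l as [|b l IH]; simpl; [auto|].
  apply Rmax_lub; [apply Hl; left; auto| apply IH; intros; apply Hl; right; auto].
Qed.

Lemma sumR_le (f g : nat -> R) n : (forall k, (k < n)%nat -> f k <= g k) -> sumR f n <= sumR g n.
Proof.
  induction n; simpl; intros H; [lra|].
  pose proof (H n ltac:(lia)). assert (sumR f n <= sumR g n) by (apply IHn; intros; apply H; lia). lra.
Qed.

Lemma sumR_scal (w : nat -> R) c n : sumR (fun j => w j * c) n = sumR w n * c.
Proof. induction n; simpl; [ring| rewrite IHn; ring]. Qed.

Lemma convex_lb (w V : nat -> R) c n : sumR w n = 1 -> (forall j, (j < n)%nat -> 0 <= w j) ->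
  (forall j, (j < n)%nat -> c <= V j) -> c <= sumR (fun j => w j * V j) n.
Proof.
  intros H1 H2 H3. replace c with (sumR (fun j => w j * c) n) by (rewrite sumR_scal, H1; ring).
  apply sumR_le; intros k Hk. apply Rmult_le_compat_l; auto.
Qed.

Lemma convex_ub (w V : nat -> R) c n : sumR w n = 1 -> (forall j, (j < n)%nat -> 0 <= w j) ->
  (forall j, (j < n)%nat -> V j <= c) -> sumR (fun j => w j * V j) n <= c.
Proof.
  intros H1 H2 H3. apply Rle_trans with (sumR (fun j => w j * c) n); [|rewrite sumR_scal, H1; lra].
  apply sumR_le; intros k Hk. apply Rmult_le_compat_l; auto.
Qed.

Lemma sum_range_eq (a d : nat) f : sum_range (S a) (a + d) f = sumR (fun k => f (S a + k)%nat) d.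
Proof. unfold sum_range. f_equal. lia. Qed.

Fixpoint Ak (z : R) (k : nat) : R := match k with O => 0 | S k' => 1 + (1 - z) * Ak z k' end.

Lemma Ak_closed z k : z <> 0 -> (1 - (1 - z) ^ k) / z = Ak z k.
Proof. intros Hz. induction k; simpl. - field; auto. - rewrite <- IHk. field; auto. Qed.

Lemma Ak_bounds z k : 0 < z <= 1 -> 0 <= Ak z k /\ z * Ak z k <= 1.
Proof. intros Hz. induction k; simpl; [lra|]. destruct IHk. split; nra. Qed.

Ltac facts Hv Hn := 
  let Hv' := fresh in pose proof Hv as Hv';
  destruct Hv' as (HB & Ham & HE0 & HEpos & HEnn & Hall);
  destruct (Hall _ Hn) as (Ha & Hq & Hqp & Hp1 & Hqa & Hap & Hbeta & Htau & HD & Heta & Hetas & HP & HPs & Hz & Hord & Himax & Himin & Hzmm);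
  clear Hall.

Definition Cn m lam n t i := sumR (fun j => m_P m n i j * VI m lam n t j) (m_K m n).

Lemma VI_le m lam n t i : (S t <= m_tau m n)%nat ->
  VI m lam n (S t) i = maxL (fun e => - lam * e + m_zeta m n i e * m_beta m n
                     + (1 - m_zeta m n i e) * Cn m lam n t i) (m_E m).
Proof. intros H. cbn [VI]. rewrite (proj2 (Nat.leb_le _ _) H). reflexivity. Qed.

Lemma VI_eq m lam n i : 
  VI m lam n (S (m_tau m n)) i = maxL (fun e => - lam * e + m_zeta m n i e * m_p m n * m_beta m n
                     + m_p m n * (1 - m_zeta m n i e) * Cn m lam n (m_tau m n) i) (m_E m).
Proof. cbn [VI]. rewrite (proj2 (Nat.leb_gt (S (m_tau m n)) (m_tau m n)) ltac:(lia)), Nat.eqb_refl. reflexivity. Qed.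

Lemma VI_gt m lam n t i : (S (m_tau m n) < S t)%nat ->
  VI m lam n (S t) i = maxL (fun e => - lam * e + m_zeta m n i e * m_p m n * m_beta m n
                     + (1 - m_zeta m n i e) * Cn m lam n t i) (m_E m).
Proof. intros H. cbn [VI]. rewrite (proj2 (Nat.leb_gt (S t) (m_tau m n)) ltac:(lia)).
  rewrite (proj2 (Nat.eqb_neq (S t) (S (m_tau m n))) ltac:(lia)). reflexivity. Qed.

Lemma E_ne m : valid m -> m_E m <> [].
Proof. intros (_&_&H&_). destruct (m_E m); [destruct H|discriminate]. Qed.

Lemma Epos_in m e : In e (Epos m) -> In e (m_E m) /\ 0 < e.
Proof. unfold Epos. rewrite filter_In. unfold posb. destruct (Rlt_dec 0 e); intuition congruence. Qed.

Lemma Epos_ne m : valid m -> Epos m <> [].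
Proof. intros (_&_&_&(e&He&He0)&_) Hn. assert (In e (Epos m)).
  { unfold Epos. rewrite filter_In. unfold posb. destruct (Rlt_dec 0 e); [auto|lra]. }
  rewrite Hn in H; destruct H. Qed.

Lemma VI_nonneg m lam n (Hv : valid m) (Hn : (n < m_N m)%nat) (Hl : 0 <= lam) :
  forall t i, (i < m_K m n)%nat -> 0 <= VI m lam n t i.
Proof.
  facts Hv Hn. induction t; intros i Hi; [simpl; lra|].
  destruct (Hz i Hi) as (Hz0 & _).
  assert (HC : 0 <= Cn m lam n t i) by (apply convex_lb; auto).
  destruct (Nat.le_gt_cases (S t) (m_tau m n)).
  - rewrite VI_le by auto. eapply Rle_trans; [|apply maxL_ub; exact HE0]. rewrite Hz0. lra.
  - destruct (Nat.eq_dec t (m_tau m n)) as [->|].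
    + rewrite VI_eq. eapply Rle_trans; [|apply maxL_ub; exact HE0]. rewrite Hz0. nra.
    + rewrite VI_gt by lia. eapply Rle_trans; [|apply maxL_ub; exact HE0]. rewrite Hz0. lra.
Qed.

Lemma VI_ub m lam n (Hv : valid m) (Hn : (n < m_N m)%nat) (Hl : 0 <= lam) :
  forall t i, (i < m_K m n)%nat -> VI m lam n t i <= m_beta m n /\
     ((m_tau m n < t)%nat -> VI m lam n t i <= m_p m n * m_beta m n).
Proof.
  facts Hv Hn. induction t; intros i Hi; [simpl; split; [lra|lia]|].
  destruct (Hz i Hi) as (Hz0 & Hz01 & _).
  assert (HC : Cn m lam n t i <= m_beta m n) by (apply convex_ub; auto; intros; apply IHt; auto).
  destruct (Nat.le_gt_cases (S t) (m_tau m n)).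
  - rewrite VI_le by auto. split; [|lia]. apply maxL_lub; [eapply E_ne; eauto|].
    intros e He. specialize (Hz01 e He). specialize (HEnn e He). nra.
  - destruct (Nat.eq_dec t (m_tau m n)) as [->|].
    + rewrite VI_eq. assert (maxL (fun e => - lam * e + m_zeta m n i e * m_p m n * m_beta m n
                     + m_p m n * (1 - m_zeta m n i e) * Cn m lam n (m_tau m n) i) (m_E m) <= m_p m n * m_beta m n).
      { apply maxL_lub; [eapply E_ne; eauto|].
        intros e He. specialize (Hz01 e He). specialize (HEnn e He).
        assert (0 <= m_p m n * (1 - m_zeta m n i e) * (m_beta m n - Cn m lam n (m_tau m n) i)).
        { apply Rmult_le_pos; [apply Rmult_le_pos|]; lra. }
        nra. }
      split; [|intros; auto]. nra.
    + assert (HC2 : Cn m lam n t i <= m_p m n * m_beta m n) by (apply convex_ub; auto; intros; apply IHt; auto; lia).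
      rewrite VI_gt by lia. assert (maxL (fun e => - lam * e + m_zeta m n i e * m_p m n * m_beta m n
                     + (1 - m_zeta m n i e) * Cn m lam n t i) (m_E m) <= m_p m n * m_beta m n).
      { apply maxL_lub; [eapply E_ne; eauto|].
        intros e He. specialize (Hz01 e He). specialize (HEnn e He).
        assert (0 <= (1 - m_zeta m n i e) * (m_p m n * m_beta m n - Cn m lam n t i)).
        { apply Rmult_le_pos; lra. }
        nra. }
      split; [|intros; auto]. nra.
Qed.

Definition Wr m lam n e t := let z := m_zeta m n (m_imin m n) e in
  Ak z t * (- lam * e + z * m_beta m n).

Lemma Wr_S m lam n e t : Wr m lam n e (S t) =
  - lam * e + m_zeta m n (m_imin m n) e * m_beta m n + (1 - m_zeta m n (m_imin m n) e) * Wr m lam n e t.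
Proof. unfold Wr; simpl; ring. Qed.

Lemma Wr_le_beta m lam n (Hv : valid m) (Hn : (n < m_N m)%nat) (Hl : 0 <= lam) e t :
  In e (Epos m) -> Wr m lam n e t <= m_beta m n.
Proof.
  facts Hv Hn. intros He. destruct (Epos_in _ _ He) as [HeE He0].
  destruct (Hz _ Himin) as (_ & Hz01 & Hzp & _).
  pose proof (Hz01 e HeE). pose proof (Hzp e HeE He0).
  destruct (Ak_bounds (m_zeta m n (m_imin m n) e) t) as [A0 A1]; [lra|].
  unfold Wr. cbv zeta.
  assert (0 <= Ak (m_zeta m n (m_imin m n) e) t * (lam * e)) by (apply Rmult_le_pos; nra).
  assert (m_zeta m n (m_imin m n) e * Ak (m_zeta m n (m_imin m n) e) t * m_beta m n <= 1 * m_beta m n)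
    by (apply Rmult_le_compat_r; lra).
  nra.
Qed.

Lemma lbW m lam n (Hv : valid m) (Hn : (n < m_N m)%nat) (Hl : 0 <= lam) e :
  In e (Epos m) -> forall t, (t <= m_tau m n)%nat -> forall i, (i < m_K m n)%nat ->
  Wr m lam n e t <= VI m lam n t i.
Proof.
  intros He. pose proof (Wr_le_beta m lam n Hv Hn Hl e) as Wb.
  facts Hv Hn. destruct (Epos_in _ _ He) as [HeE He0].
  induction t; intros Ht i Hi; [unfold Wr; simpl; lra|].
  rewrite VI_le by auto. eapply Rle_trans; [|apply maxL_ub; exact HeE].
  assert (HC : Wr m lam n e t <= Cn m lam n t i) by (apply convex_lb; auto; intros; apply IHt; auto; lia).
  rewrite Wr_S.
  destruct (Hz i Hi) as (_ & Hz01 & _). pose proof (Hz01 e HeE).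
  pose proof (Hzmm i e Hi HeE). pose proof (Wb t He).
  assert (0 <= (m_zeta m n i e - m_zeta m n (m_imin m n) e) * (m_beta m n - Wr m lam n e t)) by (apply Rmult_le_pos; lra).
  assert (0 <= (1 - m_zeta m n i e) * (Cn m lam n t i - Wr m lam n e t)) by (apply Rmult_le_pos; lra).
  nra.
Qed.

Lemma zpos m n (Hv : valid m) (Hn : (n < m_N m)%nat) e :
  In e (Epos m) -> 0 < m_zeta m n (m_imin m n) e <= 1.
Proof. facts Hv Hn. intros He. destruct (Epos_in _ _ He) as [HeE He0].
  destruct (Hz _ Himin) as (_ & Hz01 & Hzp & _). pose proof (Hz01 e HeE). pose proof (Hzp e HeE He0). lra. Qed.

Lemma Vl_bound m lam n (Hv : valid m) (Hn : (n < m_N m)%nat) t c :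
  (t = O -> 0 <= c) -> (forall e, In e (Epos m) -> Wr m lam n e t <= c) -> Vl m lam n t <= c.
Proof.
  intros H0 H. destruct t as [|t]; [simpl; auto|].
  unfold Vl. apply maxL_lub; [apply Epos_ne; auto|]. intros e He.
  pose proof (zpos m n Hv Hn e He). rewrite Ak_closed by lra. apply H; auto.
Qed.

Lemma Vl_le m lam n (Hv : valid m) (Hn : (n < m_N m)%nat) (Hl : 0 <= lam) t i :
  (t <= m_tau m n)%nat -> (i < m_K m n)%nat -> Vl m lam n t <= VI m lam n t i.
Proof.
  intros Ht Hi. apply Vl_bound; auto.
  - intros ->. simpl; lra.
  - intros e He. apply lbW; auto.
Qed.

Definition Tr m lam n e t := let z := m_zeta m n (m_imin m n) e in
  - (1 - m_p m n) * Ak z (t - m_tau m n) * (lam * e)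
  + m_p m n * Ak z t * (- lam * e + z * m_beta m n).

Lemma Tr_tau m lam n e : Tr m lam n e (m_tau m n) = m_p m n * Wr m lam n e (m_tau m n).
Proof. unfold Tr, Wr. rewrite Nat.sub_diag. simpl. ring. Qed.

Lemma Tr_S m lam n e t : (m_tau m n <= t)%nat -> Tr m lam n e (S t) =
  - lam * e + m_zeta m n (m_imin m n) e * m_p m n * m_beta m n
  + (1 - m_zeta m n (m_imin m n) e) * Tr m lam n e t.
Proof. intros H. unfold Tr. replace (S t - m_tau m n)%nat with (S (t - m_tau m n)) by lia.
  cbn [Ak]. ring. Qed.

Lemma Tr_le m lam n (Hv : valid m) (Hn : (n < m_N m)%nat) (Hl : 0 <= lam) e t :
  In e (Epos m) -> Tr m lam n e t <= m_p m n * m_beta m n.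
Proof.
  intros He. pose proof (zpos m n Hv Hn e He) as Hz'. facts Hv Hn.
  destruct (Epos_in _ _ He) as [HeE He0].
  destruct (Ak_bounds (m_zeta m n (m_imin m n) e) t) as [A0 A1]; [lra|].
  destruct (Ak_bounds (m_zeta m n (m_imin m n) e) (t - m_tau m n)) as [B0 B1]; [lra|].
  unfold Tr; cbv zeta.
  assert (0 <= (1 - m_p m n) * Ak (m_zeta m n (m_imin m n) e) (t - m_tau m n) * (lam * e)).
  { apply Rmult_le_pos; [apply Rmult_le_pos|]; nra. }
  assert (0 <= m_p m n * Ak (m_zeta m n (m_imin m n) e) t * (lam * e)).
  { apply Rmult_le_pos; [apply Rmult_le_pos|]; nra. }
  assert (m_p m n * (m_zeta m n (m_imin m n) e * Ak (m_zeta m n (m_imin m n) e) t) * m_beta m n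
           <= m_p m n * 1 * m_beta m n).
  { apply Rmult_le_compat_r; [lra|]. apply Rmult_le_compat_l; lra. }
  nra.
Qed.

Lemma propag m lam n (Hv : valid m) (Hn : (n < m_N m)%nat) (Hl : 0 <= lam) e :
  In e (Epos m) -> forall d i, (i < m_K m n)%nat ->
  m_p m n * Wr m lam n e (m_tau m n) <= VI m lam n (m_tau m n + d) i.
Proof.
  intros He. pose proof (lbW m lam n Hv Hn Hl e He) as LW.
  pose proof (VI_nonneg m lam n Hv Hn Hl) as NN.
  facts Hv Hn. destruct (Epos_in _ _ He) as [HeE He0].
  induction d; intros i Hi.
  - rewrite Nat.add_0_r. pose proof (LW (m_tau m n) (le_n _) i Hi). pose proof (NN (m_tau m n) i Hi).
    destruct (Rle_dec 0 (Wr m lam n e (m_tau m n))); nra.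
  - destruct (Hz i Hi) as (Hz0 & _).
    replace (m_tau m n + S d)%nat with (S (m_tau m n + d)) by lia.
    destruct d as [|d].
    + rewrite Nat.add_0_r, VI_eq. eapply Rle_trans; [|apply maxL_ub; exact HE0]. rewrite Hz0.
      assert (Wr m lam n e (m_tau m n) <= Cn m lam n (m_tau m n) i) by (apply convex_lb; auto).
      nra.
    + rewrite VI_gt by lia. eapply Rle_trans; [|apply maxL_ub; exact HE0]. rewrite Hz0.
      assert (m_p m n * Wr m lam n e (m_tau m n) <= Cn m lam n (m_tau m n + S d) i) by (apply convex_lb; auto).
      lra.
Qed.

Lemma lbT m lam n (Hv : valid m) (Hn : (n < m_N m)%nat) (Hl : 0 <= lam) e :
  In e (Epos m) -> forall d i, (i < m_K m n)%nat ->
  Tr m lam n e (m_tau m n + d) <= VI m lam n (m_tau m n + d) i.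
Proof.
  intros He. pose proof (lbW m lam n Hv Hn Hl e He) as LW.
  pose proof (propag m lam n Hv Hn Hl e He) as PR.
  pose proof (Wr_le_beta m lam n Hv Hn Hl e (m_tau m n) He) as WB.
  pose proof (Tr_le m lam n Hv Hn Hl e) as TB.
  facts Hv Hn. destruct (Epos_in _ _ He) as [HeE He0].
  induction d; intros i Hi.
  - rewrite Nat.add_0_r, Tr_tau. specialize (PR O i Hi). rewrite Nat.add_0_r in PR. exact PR.
  - destruct (Hz i Hi) as (_ & Hz01 & _). pose proof (Hz01 e HeE). pose proof (Hzmm i e Hi HeE).
    replace (m_tau m n + S d)%nat with (S (m_tau m n + d)) by lia.
    rewrite Tr_S by lia.
    destruct d as [|d].
    + rewrite Nat.add_0_r, VI_eq, Tr_tau. eapply Rle_trans; [|apply maxL_ub; exact HeE].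
      assert (Wr m lam n e (m_tau m n) <= Cn m lam n (m_tau m n) i) by (apply convex_lb; auto).
      assert (0 <= (m_zeta m n i e - m_zeta m n (m_imin m n) e) * (m_beta m n - Wr m lam n e (m_tau m n))) by (apply Rmult_le_pos; lra).
      assert (0 <= (1 - m_zeta m n i e) * (Cn m lam n (m_tau m n) i - Wr m lam n e (m_tau m n))) by (apply Rmult_le_pos; lra).
      assert (0 <= m_p m n * ((m_zeta m n i e - m_zeta m n (m_imin m n) e) * (m_beta m n - Wr m lam n e (m_tau m n)))) by (apply Rmult_le_pos; lra).
      assert (0 <= m_p m n * ((1 - m_zeta m n i e) * (Cn m lam n (m_tau m n) i - Wr m lam n e (m_tau m n)))) by (apply Rmult_le_pos; lra).
      nra.
    + rewrite VI_gt by lia. eapply Rle_trans; [|apply maxL_ub; exact HeE].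
      pose proof (TB (m_tau m n + S d)%nat He).
      set (T := Tr m lam n e (m_tau m n + S d)) in *.
      assert (T <= Cn m lam n (m_tau m n + S d) i) by (apply convex_lb; auto).
      assert (0 <= (m_zeta m n i e - m_zeta m n (m_imin m n) e) * (m_p m n * m_beta m n - T)) by (apply Rmult_le_pos; lra).
      assert (0 <= (1 - m_zeta m n i e) * (Cn m lam n (m_tau m n + S d) i - T)) by (apply Rmult_le_pos; lra).
      nra.
Qed.

Lemma Vtl_bound m lam n (Hv : valid m) (Hn : (n < m_N m)%nat) t c :
  (forall e, In e (Epos m) -> Tr m lam n e t <= c) -> Vtl m lam n t <= c.
Proof.
  intros H. unfold Vtl. apply maxL_lub; [apply Epos_ne; auto|]. intros e He.
  pose proof (zpos m n Hv Hn e He). rewrite !Ak_closed by lra. apply H; auto.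
Qed.

Lemma step_ineq a z zM Q L C S : 0 <= z <= zM -> L <= C -> C <= Q -> C <= S ->
  a + z * Q + (1 - z) * C <= S + (a + zM * (Q - L)).
Proof.
  intros Hz H1 H2 H3.
  assert (z * (Q - C) <= z * (Q - L)) by (apply Rmult_le_compat_l; lra).
  assert (z * (Q - L) <= zM * (Q - L)) by (apply Rmult_le_compat_r; lra).
  nra.
Qed.

Lemma Vu_0 m lam n : Vu m lam n 0 = 0.
Proof. reflexivity. Qed.

Lemma Vu_S m lam n t : Vu m lam n (S t) = Vu m lam n t +
  maxL (fun e => - lam * e + m_zeta m n (m_imax m n) e * (m_beta m n - Rmax 0 (Vl m lam n t))) (m_E m).
Proof.
  unfold Vu. rewrite (sum_range_eq 0 (S t)), (sum_range_eq 0 t). cbn [sumR].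
  replace (S 0 + t - 1)%nat with t by lia. reflexivity.
Qed.

Lemma Vu_ub m lam n (Hv : valid m) (Hn : (n < m_N m)%nat) (Hl : 0 <= lam) :
  forall t, (t <= m_tau m n)%nat -> forall i, (i < m_K m n)%nat -> VI m lam n t i <= Vu m lam n t.
Proof.
  pose proof (VI_nonneg m lam n Hv Hn Hl) as NN.
  pose proof (VI_ub m lam n Hv Hn Hl) as UB.
  pose proof (Vl_le m lam n Hv Hn Hl) as VL.
  facts Hv Hn.
  induction t; intros Ht i Hi; [rewrite Vu_0; simpl; lra|].
  rewrite VI_le, Vu_S by auto. apply maxL_lub; [eapply E_ne; eauto|]. intros e He.
  eapply Rle_trans; [|apply Rplus_le_compat_l, maxL_ub; exact He].
  destruct (Hz i Hi) as (_ & Hz01 & _). pose proof (Hz01 e He). pose proof (Hzmm i e Hi He).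
  replace (- lam * e + m_zeta m n i e * m_beta m n + (1 - m_zeta m n i e) * Cn m lam n t i)
    with ((- lam * e) + m_zeta m n i e * m_beta m n + (1 - m_zeta m n i e) * Cn m lam n t i) by ring.
  apply step_ineq; [lra| | |].
  - apply Rmax_lub; [apply convex_lb; auto|]. apply convex_lb; auto. intros; apply VL; auto; lia.
  - apply convex_ub; auto. intros; apply UB; auto.
  - apply convex_ub; auto. intros; apply IHt; auto; lia.
Qed.

Lemma Vtu_S m lam n d : Vtu m lam n (m_tau m n + S d) = Vtu m lam n (m_tau m n + d) +
  maxL (fun e => - lam * e + m_zeta m n (m_imax m n) e *
        (m_p m n * m_beta m n - Rmax 0 (Rmax (Vtl m lam n (m_tau m n)) (Vtl m lam n (m_tau m n + d)))))
     (m_E m).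
Proof.
  unfold Vtu. rewrite !sum_range_eq. cbn [sumR].
  replace (S (m_tau m n) + d - 1)%nat with (m_tau m n + d)%nat by lia. ring.
Qed.

Lemma Vtu_0 m lam n : Vtu m lam n (m_tau m n + 0) = m_p m n * Vu m lam n (m_tau m n).
Proof. unfold Vtu. rewrite sum_range_eq. cbn [sumR]. unfold Vu. ring. Qed.

Lemma Vtu_ub m lam n (Hv : valid m) (Hn : (n < m_N m)%nat) (Hl : 0 <= lam) :
  forall d i, (i < m_K m n)%nat -> VI m lam n (m_tau m n + S d) i <= Vtu m lam n (m_tau m n + S d).
Proof.
  pose proof (VI_nonneg m lam n Hv Hn Hl) as NN.
  pose proof (VI_ub m lam n Hv Hn Hl) as UB.
  pose proof (Vu_ub m lam n Hv Hn Hl) as VU.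
  pose proof (lbW m lam n Hv Hn Hl) as LW.
  pose proof (propag m lam n Hv Hn Hl) as PR.
  pose proof (lbT m lam n Hv Hn Hl) as LT.
  facts Hv Hn.
  induction d; intros i Hi; rewrite Vtu_S.
  - rewrite Vtu_0. replace (m_tau m n + 1)%nat with (S (m_tau m n)) by lia. rewrite VI_eq.
    apply maxL_lub; [eapply E_ne; eauto|]. intros e He.
    eapply Rle_trans; [|apply Rplus_le_compat_l, maxL_ub; exact He].
    destruct (Hz i Hi) as (_ & Hz01 & _). pose proof (Hz01 e He). pose proof (Hzmm i e Hi He).
    set (C := Cn m lam n (m_tau m n) i).
    replace (- lam * e + m_zeta m n i e * m_p m n * m_beta m n + m_p m n * (1 - m_zeta m n i e) * C)
      with ((- lam * e) + m_zeta m n i e * (m_p m n * m_beta m n) + (1 - m_zeta m n i e) * (m_p m n * C)) by ring.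
    assert (HC0 : 0 <= C) by (apply convex_lb; auto).
    assert (HCb : C <= m_beta m n) by (apply convex_ub; auto; intros; apply UB; auto).
    apply step_ineq; [lra| | |].
    + rewrite Nat.add_0_r.
      assert (Vtl m lam n (m_tau m n) <= m_p m n * C).
      { apply Vtl_bound; auto. intros e' He'. rewrite Tr_tau. apply Rmult_le_compat_l; [lra|].
        apply convex_lb; auto. }
      apply Rmax_lub; [apply Rmult_le_pos; lra|]. apply Rmax_lub; auto.
    + apply Rmult_le_compat_l; lra.
    + apply Rmult_le_compat_l; [lra|]. apply convex_ub; auto; intros; apply VU; auto.
  - replace (m_tau m n + S (S d))%nat with (S (m_tau m n + S d)) by lia. rewrite VI_gt by lia.
    apply maxL_lub; [eapply E_ne; eauto|]. intros e He.
    eapply Rle_trans; [|apply Rplus_le_compat_l, maxL_ub; exact He].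
    destruct (Hz i Hi) as (_ & Hz01 & _). pose proof (Hz01 e He). pose proof (Hzmm i e Hi He).
    set (C := Cn m lam n (m_tau m n + S d) i).
    replace (- lam * e + m_zeta m n i e * m_p m n * m_beta m n + (1 - m_zeta m n i e) * C)
      with ((- lam * e) + m_zeta m n i e * (m_p m n * m_beta m n) + (1 - m_zeta m n i e) * C) by ring.
    apply step_ineq; [lra| | |].
    + apply Rmax_lub; [apply convex_lb; auto|]. apply Rmax_lub.
      * apply Vtl_bound; auto. intros e' He'. rewrite Tr_tau.
        apply convex_lb; auto; intros; apply PR; auto.
      * apply Vtl_bound; auto. intros e' He'. apply convex_lb; auto; intros; apply LT; auto.
    + apply convex_ub; auto; intros; apply UB; auto; lia.
    + apply convex_ub; auto.
Qed.

Lemma user_bounds m lam n (Hv : valid m) (Hn : (n < m_N m)%nat) (Hl : 0 <= lam) :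
  Rmax 0 (Rmax (Vtl m lam n (m_tau m n)) (Vtl m lam n (m_tau m n + m_D m n)))
    <= sumR (fun i => m_eta m n i * VI m lam n (m_tau m n + m_D m n) i) (m_K m n)
  /\ sumR (fun i => m_eta m n i * VI m lam n (m_tau m n + m_D m n) i) (m_K m n)
    <= Rmin (m_p m n * m_beta m n) (Vtu m lam n (m_tau m n + m_D m n))
  /\ Rmax 0 (Vl m lam n (m_tau m n)) <= sumR (fun i => m_eta m n i * VI m lam n (m_tau m n) i) (m_K m n)
  /\ sumR (fun i => m_eta m n i * VI m lam n (m_tau m n) i) (m_K m n)
    <= Rmin (m_beta m n) (Vu m lam n (m_tau m n)).
Proof.
  pose proof (VI_nonneg m lam n Hv Hn Hl) as NN.
  pose proof (VI_ub m lam n Hv Hn Hl) as UB.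
  pose proof (Vu_ub m lam n Hv Hn Hl) as VU.
  pose proof (Vtu_ub m lam n Hv Hn Hl) as VTU.
  pose proof (Vl_le m lam n Hv Hn Hl) as VL.
  pose proof (propag m lam n Hv Hn Hl) as PR.
  pose proof (lbT m lam n Hv Hn Hl) as LT.
  facts Hv Hn.
  split; [|split; [|split]].
  - apply Rmax_lub; [apply convex_lb; auto|]. apply Rmax_lub.
    + apply Vtl_bound; auto. intros e He. rewrite Tr_tau. apply convex_lb; auto.
    + apply Vtl_bound; auto. intros e He. apply convex_lb; auto.
  - apply Rmin_glb.
    + apply convex_ub; auto; intros; apply UB; auto; lia.
    + destruct (m_D m n) as [|d] eqn:HDe; [lia|]. apply convex_ub; auto.
  - apply Rmax_lub; [apply convex_lb; auto|]. apply convex_lb; auto.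
  - apply Rmin_glb.
    + apply convex_ub; auto; intros; apply UB; auto.
    + apply convex_ub; auto.
Qed.

Lemma atil_bounds m n (Hv : valid m) (Hn : (n < m_N m)%nat) :
  0 <= atil m n /\ atil m n <= m_amax m.
Proof.
  facts Hv Hn. unfold atil.
  assert (H1 : m_q m n * m_amax m <= m_a m n).
  { replace (m_a m n) with (m_a m n / m_amax m * m_amax m) by (field; lra).
    apply Rmult_le_compat_r; lra. }
  assert (H2 : m_a m n <= m_p m n * m_amax m).
  { replace (m_a m n) with (m_a m n / m_amax m * m_amax m) by (field; lra).
    apply Rmult_le_compat_r; lra. }
  assert (Hi : 0 < / (m_p m n - m_q m n)) by (apply Rinv_0_lt_compat; lra).
  unfold Rdiv. split.
  - apply Rmult_le_pos; lra.
  - apply Rle_trans with (m_amax m * (m_p m n - m_q m n) * / (m_p m n - m_q m n)).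
    + apply Rmult_le_compat_r; lra.
    + right. field. lra.
Qed.

Lemma part1 m (Hm : valid m) lam : 0 <= lam -> gIl m lam <= gI m lam <= gIu m lam.
Proof.
  intros Hl. unfold gIl, gI, gIu. split; apply Rplus_le_compat_l; apply sumR_le; intros n Hn;
  destruct (user_bounds m lam n Hm Hn Hl) as (A1 & A2 & A3 & A4);
  destruct (atil_bounds m n Hm Hn) as [T1 T2];
  facts Hm Hn;
  assert (0 <= (m_amax m - atil m n) * m_q m n) by (apply Rmult_le_pos; lra);
  apply Rplus_le_compat; (apply Rmult_le_compat_l; [lra|auto]).
Qed.

Theorem corollary4 (m : Model) (Hm : valid m) :
  (forall lam, 0 <= lam -> gIl m lam <= gI m lam <= gIu m lam) /\
  (forall l1 l2 l3, 0 <= l1 -> 0 <= l2 -> 0 <= l3 ->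
     (forall mu, 0 <= mu -> gIl m l1 <= gIl m mu) ->
     (forall mu, 0 <= mu -> gI m l2 <= gI m mu) ->
     (forall mu, 0 <= mu -> gIu m l3 <= gIu m mu) ->
     gIl m l1 <= gI m l2 <= gIu m l3).
Proof.
  split; [apply part1; auto|].
  intros l1 l2 l3 H1 H2 H3 M1 M2 M3.
  destruct (part1 m Hm l2 H2). destruct (part1 m Hm l3 H3).
  specialize (M1 l2 H2). specialize (M2 l3 H3). split; lra.
Qed.
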